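(* Let $\Lambda=\sum_{k=1}^K\lambda_k\delta_{\gamma_k}\in\mathcal{P}^2_K(X)$ and $\Gamma=m(\Lambda)$. Suppose that for some $L\ge K$ the $\rho$-projection $Q^*=T_L\Gamma=\sum_{\ell=1}^L\omega^*_\ell q^*_\ell$ exists and is unique, and let $\alpha\in\mathcal{A}_{L\to K}$. If $\Lambda$ is $4\eta(\alpha)$-separated, then for all $i,j\in[L]$: $\alpha(i)=\alpha(j)\iff\rho(q^*_i,q^*_j)\le\eta(\alpha)$, and $\alpha(i)\ne\alpha(j)\iff\rho(q^*_i,q^*_j)\ge2\eta(\alpha)$. Moreover, $\alpha$ can be recovered (up to relabeling of clusters) by single-linkage clustering on the distance matrix $D^*=(\rho(q^*_i,q^*_j))_{i,j=1}^L$.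
   Context: $(X,d)$ is a metric space, $\mathcal{P}(X)$ the regular Borel probability measures on $X$ with finite $r$-th moments, equipped with the Hellinger metric $\rho$; $\mathcal{P}^2_K(X)$ is the set of probability measures on $\mathcal{P}(X)$ with at most $K$ atoms; $m(\Lambda)=\sum_k\lambda_k\gamma_k$ for $\Lambda=\sum_k\lambda_k\delta_{\gamma_k}$. A base family $\mathfrak{Q}$ of mixing measures is fixed with $\mathfrak{Q}_L=\mathfrak{Q}\cap\mathcal{P}^2_L(X)$ and $\mathcal{M}(\mathfrak{Q}_L)=\{m(\Omega):\Omega\in\mathfrak{Q}_L\}$ identifiable for each $L$; $T_L\Gamma$ is the set of minimizers of $\rho(Q,\Gamma)$ over $Q\in\mathcal{M}(\mathfrak{Q}_L)$, and when unique its mixing measure is $\Omega^*=\sum_\ell\omega^*_\ell\delta_{q^*_\ell}$. $\mathcal{A}_{L\to K}$ is the set of maps $[L]\to[K]$. For $\alpha\in\mathcal{A}_{L\to K}$: $\bar\omega^*_k(\alpha)=\sum_{\ell\in\alpha^{-1}(k)}\omega^*_\ell$, $\Omega^*_k(\alpha)=\bar\omega^*_k(\alpha)^{-1}\sum_{\ell\in\alpha^{-1}(k)}\omega^*_\ell\delta_{q^*_\ell}$, $Q^*_k(\alpha)=m(\Omega^*_k(\alpha))$. The Hellinger diameter of a finitely supported $\Omega$ is $\Delta(\Omega)=\sup\{\rho(q,q'):q,q'\in\mathrm{conv}(\mathrm{supp}(\Omega))\}$ (convex hull in $\mathcal{P}(X)$). Define $\eta(\alpha)=\sup_k\Delta(\Omega^*_k(\alpha))+\sup_k\rho(\gamma_k,Q^*_k(\alpha))$.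 $\Lambda$ is $\delta$-separated if $\inf_{i\ne j}\rho(\gamma_i,\gamma_j)>\delta$. *)

(* Defs.v *)
From HB Require Import structures.
From mathcomp Require Import all_boot all_order all_algebra.
From mathcomp Require Import all_classical all_reals all_analysis.
Set Implicit Arguments.
Unset Strict Implicit.
Unset Printing Implicit Defensive.
Import Order.TTheory GRing.Theory Num.Theory.
Local Open Scope ring_scope.
Local Open Scope classical_set_scope.

Section Defs.
Context {d : measure_display} {X : measurableType d} {R : realType}.

Definition is_metric (dist : X -> X -> R) : Prop :=
  [/\ forall x y, 0 <= dist x y,
      forall x y, dist x y = 0 <-> x = y,
      forall x y, dist x y = dist y x &
      forall x y z, dist x z <= dist x y + dist y z].

Definition dopen (dist : X -> X -> R) (U : set X) : Prop :=
  forall x, U x -> exists2 e : R, 0 < e & forall y, dist x y < e -> U y.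

Definition is_borel (dist : X -> X -> R) : Prop :=
  forall A : set X, measurable A <-> <<s dopen dist >> A.

Definition borel_regular (dist : X -> X -> R) (p : measure X R) : Prop :=
  forall A, measurable A ->
    p A = ereal_inf [set p U | U in [set U | dopen dist U /\ A `<=` U]] /\
    p A = ereal_sup [set p F | F in [set F | dopen dist (~` F) /\ F `<=` A]].

Definition finite_moment (dist : X -> X -> R) (r : R) (p : measure X R) : Prop :=
  exists x0 : X, (\int[p]_x ((dist x0 x) `^ r)%:E < +oo)%E.

Definition PX (dist : X -> X -> R) (r : R) : set (measure X R) :=
  [set p : measure X R | p setT = 1%E /\ borel_regular dist p /\ finite_moment dist r p].

Definition meq (p q : measure X R) : Prop :=
  forall A, measurable A -> p A = q A.

Definition hellinger (p q : measure X R) : R :=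
  let nu : measure X R := measure_add p q in
  xget 0 [set v : R | exists f g : X -> R,
    [/\ measurable_fun setT f /\ measurable_fun setT g,
        (forall x, 0 <= f x) /\ (forall x, 0 <= g x),
        (forall A, measurable A -> p A = (\int[nu]_(x in A) (f x)%:E)%E),
        (forall A, measurable A -> q A = (\int[nu]_(x in A) (g x)%:E)%E) &
        v = Num.sqrt (fine (\int[nu]_x
              (((Num.sqrt (f x) - Num.sqrt (g x)) ^+ 2) / 2)%:E)%E)]].

(* ---------- finitely supported mixing measures  Sum_i w_i delta_{q_i} ---------- *)
Record mixing := Mixing {
  mx_n : nat ;
  mx_w : 'I_mx_n -> {nonneg R} ;
  mx_q : 'I_mx_n -> measure X R }.
Arguments mx_w : clear implicits.
Arguments mx_q : clear implicits.

Definition mx_valid (O : mixing) : Prop := \sum_(i < mx_n O) (mx_w O i)%:num = 1.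

Definition mixture (O : mixing) : measure X R :=
  msum (fun k => mscale (if insub k is Some i then mx_w O i else 0%:nng)
                        (if insub k is Some i then mx_q O i else mzero))
       (mx_n O).

(* two representations give the same measure on P(X) (atoms up to meq) *)
Definition mix_equiv (O O' : mixing) : Prop :=
  forall p : measure X R,
    \sum_(i < mx_n O | `[< meq (mx_q O i) p >]) (mx_w O i)%:num =
    \sum_(j < mx_n O' | `[< meq (mx_q O' j) p >]) (mx_w O' j)%:num.

Definition mx_supp (O : mixing) : set (measure X R) :=
  [set mx_q O i | i in [set i | (mx_w O i)%:num != 0]].

(* P^2_L(X): probability measures on P(X) with at most L atoms *)
Definition P2 (dist : X -> X -> R) (r : R) (L : nat) : set mixing :=
  [set O | [/\ mx_valid O, mx_supp O `<=` PX dist r &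
              exists O', mix_equiv O O' /\ (mx_n O' <= L)%N]].

Definition fam_L (dist : X -> X -> R) (r : R) (Q : set mixing) (L : nat) : set mixing :=
  Q `&` P2 dist r L.

Definition identifiable (dist : X -> X -> R) (r : R) (Q : set mixing) (L : nat) : Prop :=
  forall O O', fam_L dist r Q L O -> fam_L dist r Q L O' ->
    meq (mixture O) (mixture O') -> mix_equiv O O'.

Definition TL (dist : X -> X -> R) (r : R) (Q : set mixing) (L : nat)
    (Gamma : measure X R) : set (measure X R) :=
  [set P | exists O, [/\ fam_L dist r Q L O, P = mixture O &
     forall O', fam_L dist r Q L O' ->
       hellinger (mixture O) Gamma <= hellinger (mixture O') Gamma]].

Definition hconv (S : set (measure X R)) : set (measure X R) :=
  [set P | exists O, [/\ mx_valid O, (forall i, S (mx_q O i)) & P = mixture O]].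

Definition hdiam (O : mixing) : R :=
  sup [set hellinger pq.1 pq.2 | pq in hconv (mx_supp O) `*` hconv (mx_supp O)].

Definition barw (L K : nat) (alpha : 'I_L -> 'I_K) (w : 'I_L -> {nonneg R})
    (k : 'I_K) : R :=
  \sum_(l < L | alpha l == k) (w l)%:num.

Lemma barw_ge0 (L K : nat) (alpha : 'I_L -> 'I_K) (w : 'I_L -> {nonneg R})
    (k : 'I_K) : 0 <= barw alpha w k.
Proof. by apply: sumr_ge0 => l _. Qed.

Definition cluster (L K : nat) (alpha : 'I_L -> 'I_K) (w : 'I_L -> {nonneg R})
    (q : 'I_L -> measure X R) (k : 'I_K) : mixing :=
  @Mixing L (fun l => if alpha l == k
                      then NngNum (divr_ge0 (ge0 (w l)) (barw_ge0 alpha w k))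
                      else 0%:nng) q.

Definition Qk (L K : nat) (alpha : 'I_L -> 'I_K) (w : 'I_L -> {nonneg R})
    (q : 'I_L -> measure X R) (k : 'I_K) : measure X R :=
  mixture (cluster alpha w q k).

Definition eta_alpha (L K : nat) (alpha : 'I_L -> 'I_K) (w : 'I_L -> {nonneg R})
    (q : 'I_L -> measure X R) (gamma : 'I_K -> measure X R) : R :=
  \big[Num.max/0]_(k < K | [exists l, alpha l == k]) hdiam (cluster alpha w q k)
  + \big[Num.max/0]_(k < K | [exists l, alpha l == k])
        hellinger (gamma k) (Qk alpha w q k).

Definition delta_separated (K : nat) (gamma : 'I_K -> measure X R) (delta : R) : Prop :=
  forall i j : 'I_K, i != j -> delta < hellinger (gamma i) (gamma j).

End Defs.

(* single-linkage clustering of a distance matrix D, cut at height t: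
   i and j lie in the same cluster iff they are joined by a chain of
   pairs at distance <= t *)
Definition single_linkage {R : realType} (L : nat) (D : 'I_L -> 'I_L -> R) (t : R)
  : rel 'I_L := connect (fun i j => D i j <= t).

(* Main.v *)
Require Import Defs.
From HB Require Import structures.
From mathcomp Require Import all_boot all_order all_algebra.
From mathcomp Require Import all_classical all_reals all_analysis.
From mathcomp Require Import measurable_realfun.
From mathcomp Require Import ring lra.
Set Implicit Arguments.
Unset Strict Implicit.
Unset Printing Implicit Defensive.
Import Order.TTheory GRing.Theory Num.Theory.
Local Open Scope ring_scope.
Local Open Scope classical_set_scope.

Section RN.
Context {d : measure_display} {X : measurableType d} {R : realType}.
Local Open Scope ereal_scope.

Lemma RN_real (mu nu : measure X R) : mu setT < +oo -> nu setT < +oo ->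
  (forall A, measurable A -> mu A = 0 -> nu A = 0) ->
  exists F : X -> R, [/\ measurable_fun setT F, (forall x, (0 <= F x)%R) &
    forall A, measurable A -> nu A = \int[mu]_(x in A) (F x)%:E].
Proof.
move=> muoo nuoo dom.
pose mu' := mfrestr (@measurableT _ X) muoo.
pose nu' := mfrestr (@measurableT _ X) nuoo.
have E1 A : mu' A = mu A by rewrite /mu' /mfrestr /mrestr setIT.
have E2 A : nu' A = nu A by rewrite /nu' /mfrestr /mrestr setIT.
have dom' : nu' `<< mu'.
  apply/null_content_dominatesP => A mA /=.
  rewrite /mfrestr /mrestr /= !setIT => h; rewrite E2; exact: dom.
have [f [f0 ffin fint fE]] := radon_nikodym_sigma_finite dom'.
exists (fun x => fine (f x)); split.
- exact: (measurableT_comp (fine_measurable measurableT) (measurable_int _ fint)).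
- by move=> x; apply: fine_ge0.
- move=> A mA.
  transitivity (\int[mu]_(x in A) f x); last by apply: eq_integral => x _; rewrite fineK.
  have h := fE A mA.
  have e1 : nu A = nu' A by rewrite /nu' /mfrestr /mrestr setIT.
  rewrite e1; etransitivity; first exact: h.
  apply: eq_measure_integral => B mB _.
  by rewrite /= /mfrestr /mrestr setIT.
Qed.
End RN.

Section Hbasic.
Context {d : measure_display} {X : measurableType d} {R : realType}.

Definition hset (p q : measure X R) : set R :=
  [set v : R | exists f g : X -> R,
    [/\ measurable_fun setT f /\ measurable_fun setT g,
        (forall x, 0 <= f x) /\ (forall x, 0 <= g x),
        (forall A, measurable A -> p A = (\int[measure_add p q]_(x in A) (f x)%:E)%E),
        (forall A, measurable A -> q A = (\int[measure_add p q]_(x in A) (g x)%:E)%E) &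
        v = Num.sqrt (fine (\int[measure_add p q]_x
              (((Num.sqrt (f x) - Num.sqrt (g x)) ^+ 2) / 2)%:E)%E)]].

Lemma hellE (p q : measure X R) : hellinger p q = xget 0 (hset p q).
Proof. by []. Qed.

Lemma hell_ind (P : R -> Prop) (p q : measure X R) :
  P 0 -> (forall v, hset p q v -> P v) -> P (hellinger p q).
Proof.
move=> P0 Pv; rewrite hellE; case: xgetP => [v _ hv|_] //; exact: Pv.
Qed.

Lemma hell_uniq (p q : measure X R) c :
  hset p q !=set0 -> (forall v, hset p q v -> v = c) -> hellinger p q = c.
Proof.
move=> [v hv] Pv; rewrite hellE; case: xgetP => [w _ hw|hn]; first exact: Pv.
by case: (hn v).
Qed.

Lemma hell_ge0 (p q : measure X R) : 0 <= hellinger p q.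
Proof. by apply: (hell_ind (P := fun v => 0 <= v)) => // v [f [g [_ _ _ _ ->]]]; exact: sqrtr_ge0. Qed.

Lemma hset_ext (p q p' q' : measure X R) :
  (forall A, measurable A -> p A = p' A) ->
  (forall A, measurable A -> q A = q' A) -> hset p q = hset p' q'.
Proof.
move=> pp qq.
have nn D (h : X -> \bar R) : (\int[measure_add p q]_(x in D) h x =
                          \int[measure_add p' q']_(x in D) h x)%E.
  by apply: eq_measure_integral => B mB _; rewrite [LHS]measure_addE [RHS]measure_addE pp ?qq.
apply/seteqP; split => v [f [g [m0 g0 fp gq ->]]]; exists f, g; split => //.
- by move=> A mA; rewrite -pp // fp // nn.
- by move=> A mA; rewrite -qq // gq // nn.
- by rewrite nn.
- by move=> A mA; rewrite pp // fp // nn.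
- by move=> A mA; rewrite qq // gq // nn.
- by rewrite nn.
Qed.

Lemma hell_ext (p q p' q' : measure X R) :
  (forall A, measurable A -> p A = p' A) ->
  (forall A, measurable A -> q A = q' A) -> hellinger p q = hellinger p' q'.
Proof. by move=> pp qq; rewrite !hellE (hset_ext pp qq). Qed.

Lemma hset_sym (p q : measure X R) : hset p q = hset q p.
Proof.
have nn (p1 q1 : measure X R) D (h : X -> \bar R) :
   (\int[measure_add p1 q1]_(x in D) h x = \int[measure_add q1 p1]_(x in D) h x)%E.
  by apply: eq_measure_integral => B mB _; rewrite [LHS]measure_addE [RHS]measure_addE addeC.
have sw (p1 q1 : measure X R) v : hset p1 q1 v -> hset q1 p1 v.
  move=> [f [g [[mf mg] [f0 g0] fp gq ->]]]; exists g, f; split => //.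
  - by move=> A mA; rewrite gq // nn.
  - by move=> A mA; rewrite fp // nn.
  - rewrite nn; congr (Num.sqrt (fine _)); apply: eq_integral => x _.
    by rewrite -sqrrN opprB.
by apply/seteqP; split => v; apply: sw.
Qed.

Lemma hell_sym (p q : measure X R) : hellinger p q = hellinger q p.
Proof. by rewrite !hellE hset_sym. Qed.

End Hbasic.

Section Hbound.
Context {d : measure_display} {X : measurableType d} {R : realType}.
Local Open Scope ereal_scope.

Definition hint (f g : X -> R) (x : X) : R :=
  ((Num.sqrt (f x) - Num.sqrt (g x)) ^+ 2 / 2)%R.

Lemma msqrt (f : X -> R) : measurable_fun setT f ->
  measurable_fun setT (fun x => Num.sqrt (f x)).
Proof.
move=> mf; exact: (measurableT_comp (continuous_measurable_fun (@sqrt_continuous R)) mf).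
Qed.

Lemma mhint (f g : X -> R) : measurable_fun setT f -> measurable_fun setT g ->
  measurable_fun setT (hint f g).
Proof.
move=> mf mg; rewrite /hint.
apply: (@measurable_funM _ _ _ _ (fun x => (Num.sqrt (f x) - Num.sqrt (g x)) ^+ 2)%R (cst 2^-1%R)) => //.
apply: (@measurable_funX _ _ _ _ (fun x => (Num.sqrt (f x) - Num.sqrt (g x)))%R).
by apply: measurable_funB; apply: msqrt.
Qed.

Lemma mEFin (f : X -> R) : measurable_fun setT f -> measurable_fun setT (fun x => (f x)%:E).
Proof. by move=> mf; apply/measurable_EFinP. Qed.

Lemma hint_ge0 (f g : X -> R) x : (0 <= hint f g x)%R.
Proof. by rewrite /hint mulr_ge0 // ?sqr_ge0 // invr_ge0. Qed.

Lemma hint_le (f g : X -> R) x : (0 <= f x)%R -> (0 <= g x)%R ->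
  (hint f g x <= f x + g x)%R.
Proof.
move=> f0 g0; rewrite /hint.
set a := Num.sqrt (f x); set b := Num.sqrt (g x).
have -> : f x = (a ^+ 2)%R by rewrite sqr_sqrtr.
have -> : g x = (b ^+ 2)%R by rewrite sqr_sqrtr.
have a0 : (0 <= a)%R by apply: sqrtr_ge0.
have b0 : (0 <= b)%R by apply: sqrtr_ge0.
rewrite ler_pdivrMr //; nra.
Qed.

Lemma hint_ge (f g : X -> R) x : (0 <= f x)%R -> (0 <= g x)%R ->
  (f x <= 4 * hint f g x + 2 * g x)%R.
Proof.
move=> f0 g0; rewrite /hint.
set a := Num.sqrt (f x); set b := Num.sqrt (g x).
have -> : f x = (a ^+ 2)%R by rewrite sqr_sqrtr.
have -> : g x = (b ^+ 2)%R by rewrite sqr_sqrtr.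
have e : (4 * ((a - b) ^+ 2 / 2) = 2 * (a - b) ^+ 2)%R by field.
rewrite e; have := sqr_ge0 (a - 2 * b)%R; nra.
Qed.

End Hbound.

Section Hbound2.
Context {d : measure_display} {X : measurableType d} {R : realType}.
Local Open Scope ereal_scope.

Lemma hsetP (p q : measure X R) v : hset p q v ->
  exists f g : X -> R, [/\ measurable_fun setT f /\ measurable_fun setT g,
    (forall x, (0 <= f x)%R) /\ (forall x, (0 <= g x)%R),
    (forall A, measurable A -> p A = (\int[measure_add p q]_(x in A) (f x)%:E)),
    (forall A, measurable A -> q A = (\int[measure_add p q]_(x in A) (g x)%:E)) &
    v = Num.sqrt (fine (\int[measure_add p q]_x (hint f g x)%:E))].
Proof. by []. Qed.

Lemma hell_le_fin (p q : measure X R) (a b : R) :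
  p setT = a%:E -> q setT = b%:E -> (hellinger p q <= Num.sqrt (a + b))%R.
Proof.
move=> pa qb.
have a0 : (0 <= a)%R by rewrite -lee_fin -pa measure_ge0.
have b0 : (0 <= b)%R by rewrite -lee_fin -qb measure_ge0.
apply: (hell_ind (P := fun v => is_true (v <= Num.sqrt (a + b))%R)); first exact: sqrtr_ge0.
move=> v /hsetP [f [g [[mf mg] [f0 g0] fp gq ->]]].
set nu := measure_add p q.
set I := \int[nu]_x (hint f g x)%:E.
have I0 : 0 <= I by apply: integral_ge0 => x _; rewrite lee_fin hint_ge0.
have Ile : I <= (a + b)%:E.
  rewrite /I (@le_trans _ _ (\int[nu]_x (f x + g x)%:E)) //.
    apply: ge0_le_integral => //.
    - by move=> x _; rewrite lee_fin hint_ge0.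
    - exact/mEFin/mhint.
    - by apply/mEFin/measurable_funD.
    - by move=> x _; rewrite lee_fin hint_le.
  under eq_integral do rewrite EFinD.
  rewrite ge0_integralD //.
  - by rewrite -fp // -gq // pa qb.
  - by move=> x _; rewrite lee_fin.
  - exact: mEFin.
  - by move=> x _; rewrite lee_fin.
  - exact: mEFin.
have Ifin : I \is a fin_num by rewrite ge0_fin_numE // (le_lt_trans Ile) // ltry.
rewrite ler_sqrt ?addr_ge0 //.
by rewrite -lee_fin fineK.
Qed.

Lemma hell_inf (p q : measure X R) (b : R) :
  p setT = +oo -> q setT = b%:E -> hellinger p q = 0%R.
Proof.
move=> poo qb.
apply: (hell_ind (P := fun v => v = 0%R)) => //.
move=> v /hsetP [f [g [[mf mg] [f0 g0] fp gq ->]]].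
set nu := measure_add p q.
set I := \int[nu]_x (hint f g x)%:E.
have I0 : 0 <= I by apply: integral_ge0 => x _; rewrite lee_fin hint_ge0.
have [Ioo|Ifin] := eqVneq I +oo; first by rewrite Ioo /= sqrtr0.
exfalso.
have Ile : +oo <= 4%:E * I + 2%:E * b%:E.
  rewrite -poo fp // -qb gq //.
  rewrite (@le_trans _ _ (\int[nu]_x (4 * hint f g x + 2 * g x)%:E)) //.
    apply: ge0_le_integral => //.
    - by move=> x _; rewrite lee_fin.
    - exact/mEFin.
    - apply/mEFin/measurable_funD.
        by apply: (@measurable_funM _ _ _ _ (cst 4%R)) => //; apply: mhint.
      by apply: (@measurable_funM _ _ _ _ (cst 2%R)).
    - by move=> x _; rewrite lee_fin hint_ge.
  under eq_integral do rewrite EFinD (EFinM 4%R) (EFinM 2%R).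
  rewrite ge0_integralD //.
  - rewrite ge0_integralZl_EFin //; last 2 first.
      by move=> x _; rewrite lee_fin hint_ge0.
      exact/mEFin/mhint.
    rewrite ge0_integralZl_EFin //.
      by move=> x _; rewrite lee_fin.
    exact/mEFin.
  - by move=> x _; rewrite mule_ge0 // lee_fin hint_ge0.
  - by apply: emeasurable_funM => //; exact/mEFin/mhint.
  - by move=> x _; rewrite mule_ge0 // lee_fin.
  - by apply: emeasurable_funM => //; exact/mEFin.
have : I \is a fin_num by rewrite ge0_fin_numE // ltey.
case: I Ile {I0 Ifin} => // r; rewrite leye_eq => /eqP.
Qed.

End Hbound2.

Section CVsec.
Context {d : measure_display} {X : measurableType d} {R : realType}.
Local Open Scope ereal_scope.
Import HBNNSimple.

Lemma CV (mu nu : measure X R) (F : X -> R) :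
  measurable_fun setT F -> (forall x, (0 <= F x)%R) ->
  (forall A, measurable A -> nu A = \int[mu]_(x in A) (F x)%:E) ->
  forall (f : X -> \bar R) E, (forall x, 0 <= f x) ->
    measurable E -> measurable_fun E f ->
  \int[mu]_(x in E) (f x * (F x)%:E) = \int[nu]_(x in E) f x.
Proof.
move=> mF F0 FE f E f0 mE mf; set g := fun x => (F x)%:E.
have mg : measurable_fun setT g by exact: mEFin.
have g0 x : 0 <= g x by rewrite lee_fin.
pose h := nnsfun_approx mE mf.
have -> : \int[nu]_(x in E) f x =
    lim (\int[nu]_(x in E) (EFin \o h n) x @[n --> \oo]).
  have fE x : E x -> f x = lim ((EFin \o h n) x @[n --> \oo]).
    by move=> Ex; apply/esym/cvg_lim => //; exact: cvg_nnsfun_approx.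
  under eq_integral => x /[!inE] /fE -> //.
  apply: monotone_convergence => //.
  - move=> n; apply/measurable_EFinP.
    by apply: (measurable_funS measurableT) => //; exact/measurable_funP.
  - by move=> n x Ex //=; rewrite lee_fin.
  - by move=> x Ex a b ab; rewrite lee_fin; exact/lefP/nd_nnsfun_approx.
have -> : \int[mu]_(x in E) (f x * g x) =
    lim (\int[mu]_(x in E) ((EFin \o h n) \* g) x @[n --> \oo]).
  have fg x : E x -> f x * g x = lim (((EFin \o h n) \* g) x @[n --> \oo]).
    by move=> Ex; apply/esym/cvg_lim => //; apply: cvgeZr;
      [by []|exact: cvg_nnsfun_approx].
  under eq_integral => x /[!inE] /fg -> //.
  apply: monotone_convergence => [//| | |].
  - move=> n; apply/emeasurable_funM; apply/measurable_funTS.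
      exact/measurable_EFinP.
    exact: mg.
  - by move=> n x Ex /=; rewrite mule_ge0 ?lee_fin.
  - by move=> x Ex a b ab/=; rewrite lee_wpmul2r ?lee_fin//; exact/lefP/nd_nnsfun_approx.
suff suf n : \int[mu]_(x in E) ((EFin \o h n) x * g x) =
    \int[nu]_(x in E) (EFin \o h n) x.
  by under eq_fun do rewrite suf.
transitivity (\int[nu]_(x in E)
   (\sum_(y \in range (h n)) (y * \1_(h n @^-1` [set y]) x)%:E)); last first.
  by apply: eq_integral => t tE; rewrite /= fimfunE -fsumEFin.
have indich m r : measurable_fun E (fun x => (r * \1_(h m @^-1` [set r]) x)%:E).
  by apply: (measurable_comp measurableT) => //; exact: measurable_funM.
rewrite ge0_integral_fsum//; last by move=> m y Ey; exact: nnfun_muleindic_ge0.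
transitivity (\int[mu]_(x in E) (\sum_(y \in range (h n))
    (y * \1_(h n @^-1` [set y]) x)%:E * g x)).
  under [RHS]eq_integral => x xE.
    rewrite -ge0_mule_fsuml => [|y]; last exact: nnfun_muleindic_ge0.
    rewrite fsumEFin // -(fimfunE _ x); over.
  by [].
rewrite ge0_integral_fsum//; last 2 first.
  - move=> y; apply: emeasurable_funM => //; apply: measurable_funTS.
    exact: mg.
  - by move=> m y Ey; rewrite mule_ge0 // nnfun_muleindic_ge0.
apply: eq_fsbigr => r rhn.
under [RHS]eq_integral do rewrite EFinM.
rewrite integralZl_indic_nnsfun => //.
under eq_integral do rewrite EFinM -muleA.
rewrite ge0_integralZl//.
- under eq_integral do rewrite muleC.
  rewrite (eq_integral (g \_ (h n @^-1` [set r]))); last first.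
    by move=> x xE; rewrite epatch_indic.
  by rewrite -integral_mkcondr -FE// integral_indic// setIC.
- apply: emeasurable_funM; first exact/measurable_EFinP.
  exact/measurable_funTS/mg.
- by move=> t Et; rewrite mule_ge0 ?lee_fin.
- by move: rhn; rewrite inE => -[t _ <-]; rewrite lee_fin.
Qed.

End CVsec.

Section L1sec.
Context {d : measure_display} {X : measurableType d} {R : realType}.
Local Open Scope ereal_scope.

Lemma hint_mul (f g S : R) : (0 <= f)%R -> (0 <= g)%R -> (0 <= S)%R ->
  (((Num.sqrt f - Num.sqrt g) ^+ 2 / 2) * S =
   (Num.sqrt (f * S) - Num.sqrt (g * S)) ^+ 2 / 2)%R.
Proof.
move=> f0 g0 S0.
rewrite !sqrtrM //.
have := sqr_sqrtr S0; set s := Num.sqrt S => eS.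
by rewrite -eS; ring.
Qed.

Lemma dens_int (mu a : measure X R) (F : X -> R) :
  measurable_fun setT F -> (forall x, (0 <= F x)%R) ->
  (forall A, measurable A -> a A = \int[mu]_(x in A) (F x)%:E) ->
  a setT < +oo -> mu.-integrable setT (fun x => (F x)%:E).
Proof.
move=> mF F0 FE aoo; apply/integrableP; split; first exact: mEFin.
under eq_integral do rewrite gee0_abs ?lee_fin //.
by rewrite -FE.
Qed.

Lemma L1 (mu a b : measure X R) (Fa Fb : X -> R) :
  measurable_fun setT Fa -> measurable_fun setT Fb ->
  (forall x, (0 <= Fa x)%R) -> (forall x, (0 <= Fb x)%R) ->
  (forall A, measurable A -> a A = \int[mu]_(x in A) (Fa x)%:E) ->
  (forall A, measurable A -> b A = \int[mu]_(x in A) (Fb x)%:E) ->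
  a setT < +oo -> b setT < +oo ->
  hellinger a b = Num.sqrt (fine (\int[mu]_x (hint Fa Fb x)%:E)).
Proof.
move=> mFa mFb Fa0 Fb0 FaE FbE aoo boo.
set nu := measure_add a b.
set S := fun x => (Fa x + Fb x)%R.
have mS : measurable_fun setT S by exact: measurable_funD.
have S0 x : (0 <= S x)%R by rewrite addr_ge0.
have K (h : X -> \bar R) E : (forall x, 0 <= h x) -> measurable E ->
    measurable_fun E h ->
    \int[nu]_(x in E) h x = \int[mu]_(x in E) (h x * (S x)%:E).
  move=> h0 mE mh.
  rewrite /nu ge0_integral_measure_add //.
  rewrite -(CV mFa Fa0 FaE) // -(CV mFb Fb0 FbE) //.
  rewrite -ge0_integralD //; first last.
  - apply: emeasurable_funM => //; apply: measurable_funTS; exact: mEFin.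
  - by move=> x _; rewrite mule_ge0 // lee_fin.
  - apply: emeasurable_funM => //; apply: measurable_funTS; exact: mEFin.
  - by move=> x _; rewrite mule_ge0 // lee_fin.
  apply: eq_integral => x _.
  by rewrite /S EFinD ge0_muleDr // lee_fin.
have nuoo : nu setT < +oo.
  by rewrite /nu measure_addE lte_add_pinfty.
have dom (c : measure X R) : (forall A, c A <= nu A) ->
    forall A, measurable A -> nu A = 0 -> c A = 0.
  move=> cle A mA nu0; apply/eqP; rewrite eq_le measure_ge0 andbT.
  by rewrite -nu0 cle.
have leA A : a A <= nu A by rewrite /nu measure_addE leeDl.
have leB A : b A <= nu A by rewrite /nu measure_addE leeDr.
apply: hell_uniq.
- have [f [mf f0 fE]] := RN_real nuoo aoo (dom a leA).
  have [g [mg g0 gE]] := RN_real nuoo boo (dom b leB).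
  by exists (Num.sqrt (fine (\int[nu]_x (hint f g x)%:E))), f, g.
move=> v /hsetP [f [g [[mf mg] [f0 g0] fE gE ->]]].
congr (Num.sqrt (fine _)).
rewrite (K _ _ _ measurableT); first last.
- exact/mEFin/mhint.
- by move=> x; rewrite lee_fin hint_ge0.
have aeX (Fc c : X -> R) (cc : measure X R) :
    measurable_fun setT Fc -> (forall x, (0 <= Fc x)%R) ->
    (forall A, measurable A -> cc A = \int[mu]_(x in A) (Fc x)%:E) ->
    cc setT < +oo ->
    measurable_fun setT c -> (forall x, (0 <= c x)%R) ->
    (forall A, measurable A -> cc A = \int[nu]_(x in A) (c x)%:E) ->
    ae_eq mu setT (fun x => (Fc x)%:E) (fun x => (c x * S x)%:E).
  move=> mFc Fc0 FcE ccoo mc c0 cE.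
  apply: integral_ae_eq => //.
  - exact: dens_int mFc Fc0 FcE ccoo.
  - exact/mEFin/measurable_funM.
  - move=> E _ mE; rewrite -FcE // cE // K //.
    exact/measurable_funTS/mEFin.
have aeA := aeX _ _ _ mFa Fa0 FaE aoo mf f0 fE.
have aeB := aeX _ _ _ mFb Fb0 FbE boo mg g0 gE.
apply: ae_eq_integral => //.
- by apply: emeasurable_funM; apply: mEFin => //; apply: mhint.
- exact/mEFin/mhint.
apply: filterS2 aeA aeB => x e1 e2 _.
move: (e1 I) (e2 I) => [ea] [eb].
by rewrite -EFinM /hint hint_mul // -ea -eb.
Qed.

End L1sec.

Section Minksec.
Context {d : measure_display} {X : measurableType d} {R : realType}.
Local Open Scope ereal_scope.

Lemma N2E (mu : measure X R) (u : X -> R) (I : R) : (0 <= I)%R ->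
  \int[mu]_x ((u x) ^+ 2)%:E = I%:E -> 'N[mu]_2%:E[EFin \o u] = (Num.sqrt I)%:E.
Proof.
move=> I0 uI; rewrite unlock /=.
rewrite (eq_integral (fun x => ((u x)^+2)%:E)); last by move=> x _; rewrite powR_mulrn // real_normK // num_real.
by rewrite uI poweR_EFin powR12_sqrt.
Qed.

Lemma hint_fin (mu : measure X R) (F G : X -> R) :
  measurable_fun setT F -> measurable_fun setT G ->
  (forall x, (0 <= F x)%R) -> (forall x, (0 <= G x)%R) ->
  \int[mu]_x (F x)%:E < +oo -> \int[mu]_x (G x)%:E < +oo ->
  \int[mu]_x (hint F G x)%:E = (fine (\int[mu]_x (hint F G x)%:E))%:E.
Proof.
move=> mF mG F0 G0 Foo Goo.
have I0 : 0 <= \int[mu]_x (hint F G x)%:E.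
  by apply: integral_ge0 => x _; rewrite lee_fin hint_ge0.
rewrite fineK // ge0_fin_numE //.
apply: (@le_lt_trans _ _ (\int[mu]_x (F x + G x)%:E)).
  apply: ge0_le_integral => //.
  - by move=> x _; rewrite lee_fin hint_ge0.
  - exact/mEFin/mhint.
  - by apply/mEFin/measurable_funD.
  - by move=> x _; rewrite lee_fin hint_le.
under eq_integral do rewrite EFinD.
rewrite ge0_integralD //.
- by rewrite lte_add_pinfty.
- by move=> x _; rewrite lee_fin.
- exact: mEFin.
- by move=> x _; rewrite lee_fin.
- exact: mEFin.
Qed.

Lemma Hint_tri (mu : measure X R) (F G H : X -> R) :
  measurable_fun setT F -> measurable_fun setT G -> measurable_fun setT H ->
  (forall x, (0 <= F x)%R) -> (forall x, (0 <= G x)%R) -> (forall x, (0 <= H x)%R) ->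
  \int[mu]_x (F x)%:E < +oo -> \int[mu]_x (G x)%:E < +oo -> \int[mu]_x (H x)%:E < +oo ->
  (Num.sqrt (fine (\int[mu]_x (hint F H x)%:E)) <=
   Num.sqrt (fine (\int[mu]_x (hint F G x)%:E)) +
   Num.sqrt (fine (\int[mu]_x (hint G H x)%:E)))%R.
Proof.
move=> mF mG mH F0 G0 H0 Foo Goo Hoo.
have s2 : (0 < Num.sqrt 2 :> R)%R by rewrite sqrtr_gt0.
pose u x := ((Num.sqrt (F x) - Num.sqrt (G x)) / Num.sqrt 2)%R.
pose w x := ((Num.sqrt (G x) - Num.sqrt (H x)) / Num.sqrt 2)%R.
have sq (a b : R) : (((a - b) / Num.sqrt 2) ^+ 2 = (a - b) ^+ 2 / 2)%R.
  by rewrite expr_div_n sqr_sqrtr.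
have mq (A B : X -> R) : measurable_fun setT A -> measurable_fun setT B ->
    measurable_fun setT (fun x => ((Num.sqrt (A x) - Num.sqrt (B x)) / Num.sqrt 2)%R).
  move=> mA mB.
  apply: (@measurable_funM _ _ _ _ (fun x => (Num.sqrt (A x) - Num.sqrt (B x)))%R (cst (Num.sqrt 2)^-1%R)) => //.
  by apply: measurable_funB; apply: msqrt.
have mu_ : measurable_fun setT u by exact: mq.
have mw : measurable_fun setT w by exact: mq.
have := minkowski_EFin mu mu_ mw (_ : (1 <= 2)%R).
have I0 (A B : X -> R) : (0 <= fine (\int[mu]_x (hint A B x)%:E))%R.
  by apply: fine_ge0; apply: integral_ge0 => x _; rewrite lee_fin hint_ge0.
rewrite (@N2E _ u (fine (\int[mu]_x (hint F G x)%:E))) //; last first.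
  by rewrite -hint_fin //; apply: eq_integral => x _; rewrite /u sq.
rewrite (@N2E _ w (fine (\int[mu]_x (hint G H x)%:E))) //; last first.
  by rewrite -hint_fin //; apply: eq_integral => x _; rewrite /w sq.
rewrite (@N2E _ (u \+ w)%R (fine (\int[mu]_x (hint F H x)%:E))) //; last first.
  rewrite -hint_fin //; apply: eq_integral => x _; rewrite /u /w /=.
  by rewrite -mulrDl addrA subrK sq.
by rewrite -EFinD lee_fin; apply; rewrite ler1n.
Qed.

End Minksec.

Section Trisec.
Context {d : measure_display} {X : measurableType d} {R : realType}.
Local Open Scope ereal_scope.

Lemma maddE3 (a b c : measure X R) A :
  measure_add (measure_add a b) c A = a A + b A + c A.
Proof. rewrite measure_addE; congr (_ + _); exact: measure_addE. Qed.

Lemma hell_tri (a b c : measure X R) :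
  a setT < +oo -> b setT < +oo -> c setT < +oo ->
  (hellinger a c <= hellinger a b + hellinger b c)%R.
Proof.
move=> aoo boo coo.
set mu := measure_add (measure_add a b) c.
have muoo : mu setT < +oo.
  by rewrite /mu maddE3 !lte_add_pinfty.
have dom (e : measure X R) : (forall A, e A <= mu A) ->
    forall A, measurable A -> mu A = 0 -> e A = 0.
  move=> ele A mA mu0; apply/eqP; rewrite eq_le measure_ge0 andbT.
  by rewrite -mu0 ele.
have leA A : a A <= mu A.
  by rewrite /mu maddE3 -addeA leeDl // adde_ge0.
have leB A : b A <= mu A.
  by rewrite /mu maddE3 -addeA addeCA leeDl // adde_ge0.
have leC A : c A <= mu A by rewrite /mu maddE3 leeDr // adde_ge0.
have [Fa [mFa Fa0 FaE]] := RN_real muoo aoo (dom a leA).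
have [Fb [mFb Fb0 FbE]] := RN_real muoo boo (dom b leB).
have [Fc [mFc Fc0 FcE]] := RN_real muoo coo (dom c leC).
rewrite (L1 mFa mFc Fa0 Fc0 FaE FcE) // (L1 mFa mFb Fa0 Fb0 FaE FbE) //.
rewrite (L1 mFb mFc Fb0 Fc0 FbE FcE) //.
apply: Hint_tri => //.
- by rewrite -FaE.
- by rewrite -FbE.
- by rewrite -FcE.
Qed.

End Trisec.

Section Comb.
Context {d : measure_display} {X : measurableType d} {R : realType}.

Lemma mixtureE (O : @mixing d X R) A :
  mixture O A = (\sum_(i < mx_n O) ((@mx_w _ _ _ O i)%:num)%:E * @mx_q _ _ _ O i A)%E.
Proof.
rewrite /mixture /= /msum; apply: eq_bigr => i _.
by rewrite /mscale valK.
Qed.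

Lemma mixture_prob (O : @mixing d X R) :
  (forall i, @mx_q _ _ _ O i setT = 1%E) -> mixture O setT = (\sum_(i < mx_n O) (@mx_w _ _ _ O i)%:num)%:E.
Proof.
move=> H; rewrite mixtureE.
rewrite (eq_bigr (fun i => ((@mx_w _ _ _ O i)%:num)%:E)); last by move=> i _; rewrite H mule1.
by rewrite sumEFin.
Qed.

Lemma hconv_prob (S : set (measure X R)) x :
  (forall p, S p -> p setT = 1%E) -> hconv S x -> x setT = 1%E.
Proof.
move=> HS [ O1 [Hv inS ->]].
rewrite mixture_prob; first by rewrite Hv.
by move=> i; apply: HS.
Qed.

Lemma hdiam_ge (O : @mixing d X R) x y :
  (forall p, mx_supp O p -> p setT = 1%E) ->
  hconv (mx_supp O) x -> hconv (mx_supp O) y -> hellinger x y <= hdiam O.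
Proof.
move=> HS hx hy; rewrite /hdiam.
apply: sup_upper_bound; last by exists (x, y).
split; first by exists (hellinger x y), (x, y).
exists (Num.sqrt (1 + 1)) => z [[p1 p2] [/= h1 h2] <-].
by apply: hell_le_fin; [apply: hconv_prob h1|apply: hconv_prob h2].
Qed.

End Comb.

Section Clus.
Context {d : measure_display} {X : measurableType d} {R : realType}.
Variables (L K : nat) (alpha : 'I_L -> 'I_K) (omega : 'I_L -> {nonneg R})
  (q : 'I_L -> measure X R).
Hypothesis Hw : forall l, (omega l)%:num != 0.
Hypothesis Hq : forall l, q l setT = 1%E.

Lemma barw_gt0 i : 0 < barw alpha omega (alpha i).
Proof.
rewrite /barw (bigD1 i) //=.
have s : 0 <= \sum_(l < L | (alpha l == alpha i) && (l != i)) (omega l)%:num.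
  by apply: sumr_ge0 => l _.
have : 0 < (omega i)%:num by rewrite lt0r Hw /=.
lra.
Qed.

Lemma clw k l : (@mx_w _ _ _ (Defs.cluster alpha omega q k) l)%:num =
  if alpha l == k then (omega l)%:num / barw alpha omega k else 0.
Proof. by rewrite /cluster /=; case: ifP. Qed.

Lemma cl_valid i : mx_valid (Defs.cluster alpha omega q (alpha i)).
Proof.
rewrite /mx_valid /=.
under eq_bigr do rewrite clw.
rewrite -big_mkcond /= -mulr_suml divff //.
by have := barw_gt0 i; rewrite lt0r => /andP[].
Qed.

Lemma cl_supp k p : mx_supp (Defs.cluster alpha omega q k) p ->
  exists2 l, alpha l = k & p = q l.
Proof.
move=> [l /= hl <-]; exists l => //.
by move: hl; rewrite clw; case: (alpha l =P k) => // _; rewrite eqxx.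
Qed.

Lemma cl_supp_prob k p : mx_supp (Defs.cluster alpha omega q k) p -> p setT = 1%E.
Proof. by move=> /cl_supp [l _ ->]. Qed.

Lemma cl_in_supp l : mx_supp (Defs.cluster alpha omega q (alpha l)) (q l).
Proof.
exists l => //=; rewrite clw eqxx mulf_neq0 //.
by rewrite invr_eq0; have := barw_gt0 l; rewrite lt0r => /andP[].
Qed.

Definition single (p : measure X R) : @mixing d X R :=
  @Mixing _ _ _ 1 (fun _ => 1%:nng) (fun _ => p).

Lemma singleE p A : mixture (single p) A = p A.
Proof. by rewrite mixtureE big_ord1 /= mul1e. Qed.

Lemma single_hconv (S : set (measure X R)) p : S p -> hconv S (mixture (single p)).
Proof.
move=> Sp; exists (single p); split => //.
by rewrite /mx_valid big_ord1.
Qed.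

Definition clO k l0 : @mixing d X R :=
  @Mixing _ _ _ L (@mx_w _ _ _ (Defs.cluster alpha omega q k))
     (fun l => if alpha l == k then q l else q l0).

Lemma clOE k l0 A : mixture (clO k l0) A = Qk alpha omega q k A.
Proof.
rewrite /Qk !mixtureE; apply: eq_bigr => l _ /=.
rewrite /cluster /=; case: ifP => //= _.
by rewrite !mul0e.
Qed.

Lemma clO_hconv l0 : hconv (mx_supp (Defs.cluster alpha omega q (alpha l0)))
   (mixture (clO (alpha l0) l0)).
Proof.
exists (clO (alpha l0) l0); split => //.
- exact: (cl_valid l0).
- move=> l /=; case: ifP => [/eqP <-|_]; exact: cl_in_supp.
Qed.

Lemma D1 i j : alpha i = alpha j ->
  hellinger (q i) (q j) <= hdiam (Defs.cluster alpha omega q (alpha i)).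
Proof.
move=> eij.
rewrite (@hell_ext _ _ _ _ _ (mixture (single (q i))) (mixture (single (q j))));
  last 2 first.
- by move=> A _; rewrite singleE.
- by move=> A _; rewrite singleE.
apply: hdiam_ge.
- exact: cl_supp_prob.
- exact/single_hconv/cl_in_supp.
- by apply/single_hconv; rewrite eij; exact: cl_in_supp.
Qed.

Lemma D2 i : hellinger (Qk alpha omega q (alpha i)) (q i) <=
   hdiam (Defs.cluster alpha omega q (alpha i)).
Proof.
rewrite (@hell_ext _ _ _ _ _ (mixture (clO (alpha i) i)) (mixture (single (q i))));
  last 2 first.
- by move=> A _; rewrite clOE.
- by move=> A _; rewrite singleE.
apply: hdiam_ge.
- exact: cl_supp_prob.
- exact: clO_hconv.
- exact/single_hconv/cl_in_supp.
Qed.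

Lemma Qk_prob i : Qk alpha omega q (alpha i) setT = 1%E.
Proof.
rewrite /Qk mixture_prob; first by rewrite (cl_valid i).
by move=> l /=; apply: Hq.
Qed.

End Clus.

Unset Implicit Arguments.
Set Strict Implicit.

Lemma aux1 (R : realType) (e x : R) : 0 <= e -> 2 * e < x -> x <= e -> False.
Proof. lra. Qed.
Lemma aux2 (R : realType) (e x : R) : 0 < e -> x <= e -> 2 * e <= x -> False.
Proof. lra. Qed.
Lemma aux3 (R : realType) (e x g M1 M2 : R) : e = M1 + M2 -> 4 * e < g ->
  g <= M2 + (M1 + (x + (M1 + M2))) -> 2 * e < x.
Proof. lra. Qed.

Theorem proposition1
  (d : measure_display) (X : measurableType d) (R : realType)
  (dist : X -> X -> R) (r : R)
  (Hdist : is_metric dist) (Hborel : is_borel dist) (Hr : 0 < r)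
  (Qfam : set (@mixing d X R))
  (HQinv : forall O O', mix_equiv O O' -> Qfam O -> Qfam O')
  (Hident : forall L : nat, identifiable dist r Qfam L)
  (K : nat) (lambda : 'I_K -> {nonneg R}) (gamma : 'I_K -> measure X R)
  (HLambda : P2 dist r K (Mixing lambda gamma))
  (L : nat) (HLK : (K <= L)%N)
  (omega : 'I_L -> {nonneg R}) (q : 'I_L -> measure X R)
  (Hatoms : forall l, (omega l)%:num != 0)
  (Hproj : TL dist r Qfam L (mixture (Mixing lambda gamma))
                                  (mixture (Mixing omega q)))
  (Huniq : forall P, TL dist r Qfam L (mixture (Mixing lambda gamma)) P ->
                     meq P (mixture (Mixing omega q)))
  (HOmega : fam_L dist r Qfam L (Mixing omega q))
  (alpha : 'I_L -> 'I_K)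
  (Hsep : delta_separated gamma (4 * eta_alpha alpha omega q gamma)) :
  let e := eta_alpha alpha omega q gamma in
  [/\ forall i j : 'I_L, alpha i = alpha j <-> hellinger (q i) (q j) <= e,
      forall i j : 'I_L, alpha i <> alpha j -> 2 * e <= hellinger (q i) (q j),
      0 < e -> forall i j : 'I_L,
                 alpha i <> alpha j <-> 2 * e <= hellinger (q i) (q j) &
      exists t : R, forall i j : 'I_L,
        single_linkage (fun a b => hellinger (q a) (q b)) t i j = (alpha i == alpha j)].
Proof.
move=> e.
have Hq l : q l setT = 1%E.
  case: HOmega => _ [_ Hsupp _].
  have hs : mx_supp (Mixing omega q) (q l) by exists l => //=; exact: Hatoms.
  by case: (Hsupp _ hs).
set M1 := \big[Num.max/0]_(k < K | [exists l, alpha l == k])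
             hdiam (Defs.cluster alpha omega q k).
set M2 := \big[Num.max/0]_(k < K | [exists l, alpha l == k])
             hellinger (gamma k) (Qk alpha omega q k).
have eE : e = M1 + M2 by [].
have M10 : 0 <= M1 by apply: bigmax_ge_id.
have M20 : 0 <= M2 by apply: bigmax_ge_id.
have e0 : 0 <= e by rewrite eE addr_ge0.
have ex i : [exists l, alpha l == alpha i] by apply/existsP; exists i.
have hd i : hdiam (Defs.cluster alpha omega q (alpha i)) <= M1.
  exact: (@le_bigmax_cond _ _ _ 0 (alpha i) (fun k => [exists l, alpha l == k])
            (fun k => hdiam (Defs.cluster alpha omega q k)) (ex i)).
have hg i : hellinger (gamma (alpha i)) (Qk alpha omega q (alpha i)) <= M2.
  exact: (@le_bigmax_cond _ _ _ 0 (alpha i) (fun k => [exists l, alpha l == k])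
            (fun k => hellinger (gamma k) (Qk alpha omega q k)) (ex i)).
have eD : eta_alpha alpha omega q gamma = e by [].
rewrite eD in Hsep.
clearbody M1 M2 e.
have FA i j : alpha i = alpha j -> hellinger (q i) (q j) <= e.
  move=> eij; rewrite eE (le_trans (D1 Hatoms Hq eij)) //.
  by rewrite (le_trans (hd i)) // lerDl.
have [k0 Hk0] : exists k0, (lambda k0)%:num != 0.
  case: HLambda => Hval _ _.
  apply/existsP; apply: contraT; rewrite negb_exists => /forallP H0.
  move: Hval; rewrite /mx_valid /= big1 => [/esym/eqP|k _].
    by rewrite oner_eq0.
  by apply/eqP; have := H0 k; rewrite negbK.
have g1 : gamma k0 setT = 1%:E.
  case: HLambda => _ Hsupp _.
  have hs : mx_supp (Mixing lambda gamma) (gamma k0) by exists k0.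
  by case: (Hsupp _ hs).
have gfin k : (gamma k setT < +oo)%E.
  case: (eqVneq k k0) => [->|nk]; first by rewrite g1 ltry.
  rewrite ltey; apply/eqP => ginf.
  have := Hsep k k0 nk.
  by rewrite (hell_inf ginf g1) ltNge mulr_ge0.
have p1fin (p : measure X R) : p setT = 1%:E -> (p setT < +oo)%E.
  by move=> ->; rewrite ltry.
have FB i j : alpha i <> alpha j -> 2 * e < hellinger (q i) (q j).
  move=> nij.
  set k := alpha i; set k' := alpha j.
  set Qi := Qk alpha omega q k; set Qj := Qk alpha omega q k'.
  have Qi1 : (Qi setT < +oo)%E by apply: p1fin; apply: Qk_prob.
  have Qj1 : (Qj setT < +oo)%E by apply: p1fin; apply: Qk_prob.
  have qi1 : (q i setT < +oo)%E by apply: p1fin.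
  have qj1 : (q j setT < +oo)%E by apply: p1fin.
  have t1 := hell_tri (gfin k) Qi1 (gfin k').
  have t2 := hell_tri Qi1 qi1 (gfin k').
  have t3 := hell_tri qi1 qj1 (gfin k').
  have t4 := hell_tri qj1 Qj1 (gfin k').
  have b1 : hellinger (gamma k) Qi <= M2 by apply: hg.
  have b2 : hellinger Qi (q i) <= M1.
    by apply: le_trans (hd i); apply: D2.
  have b3 : hellinger (q j) Qj <= M1.
    by rewrite hell_sym; apply: le_trans (hd j); apply: D2.
  have b4 : hellinger Qj (gamma k') <= M2 by rewrite hell_sym; apply: hg.
  have sep : 4 * e < hellinger (gamma k) (gamma k').
    by apply: Hsep; apply/eqP.
  apply: (@aux3 _ _ _ _ _ _ eE sep).
  apply: (le_trans t1); apply: lerD => //.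
  apply: (le_trans t2); apply: lerD => //.
  apply: (le_trans t3); apply: lerD => //.
  apply: (le_trans t4); exact: lerD.
have P1 i j : alpha i = alpha j <-> hellinger (q i) (q j) <= e.
  split; first exact: FA.
  move=> h; apply: contrapT => nij; exact: (@aux1 _ _ _ e0 (FB i j nij) h).
split => //.
- by move=> i j nij; apply/ltW/FB.
- move=> e0' i j; split; first by move=> nij; apply/ltW/FB.
  by move=> h eij; exact: (@aux2 _ _ _ e0' (FA i j eij) h).
exists e => i j.
have rE : (fun a b => hellinger (q a) (q b) <= e) =2 (fun a b => alpha a == alpha b).
  by move=> a b; apply/idP/eqP => /P1.
rewrite /single_linkage (eq_connect rE).
apply/idP/eqP; last by move=> eij; apply: connect1 => /=; apply/eqP.
move=> /connectP [p pth ->] {j}.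
elim: p i pth => [//|x p IH] i /= /andP[/eqP eix pth].
by rewrite eix; apply: IH.
Qed.
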